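(* Let $C_1,\dots,C_M$ be linear codes of length $n$ over $\mathbb{F}_q$, let $A=(a_{i,j})$ be an $M\times N$ ($M\le N$) upper triangular matrix that is nonsingular by columns, let $C=[C_1,\dots,C_M]\cdot A$, let $1\le b\le n$, and set $d^*=\min\{(N-i+1)d_b(C_i)\mid i=1,\dots,M\}$. Then: (a) $d_b(C)\le\min\{N d_b(C_1),\,(N-i+1)d_b(C_i)+b-1 \mid i=2,\dots,M\}$. (b) If $d^*=N d_b(C_1)$, then $d_b(C)=d^*$. (c) Let $2\le i_0\le M$ satisfy $(N-i_0+1)d_b(C_{i_0})=d^*$. If there exist a codeword $\mathbf{c}_{i_0}\in C_{i_0}$ with $w_b(\mathbf{c}_{i_0})=d_b(C_{i_0})$ and a hole $H\in\mathbb{H}(\chi_1(\mathbf{c}_{i_0}))$ with $|H|\ge b-1$ and $\{1,n\}\cap H\ne\emptyset$, then $d_b(C)=d^*$.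
   Context: For a vector of length $L$, indices are cyclic mod $L$; $\chi_b(\mathbf{x})=\{i\in\{1,\dots,L\}:(x_i,\dots,x_{i+b-1})\ne\mathbf{0}\}$ (indices mod $L$), $w_b(\mathbf{x})=|\chi_b(\mathbf{x})|$, and for a linear code $C$, $d_b(C)=\min_{\mathbf{0}\ne\mathbf{c}\in C}w_b(\mathbf{c})$. For $J\subseteq\mathbb{Z}_n=\{1,\dots,n\}$, a hole of $J$ of size $h\ge1$ is a set $H=\{a+1,\dots,a+h\}\subseteq\mathbb{Z}_n\setminus J$ (indices mod $n$) with $a,a+h+1\in J$; $\mathbb{H}(J)$ is the set of holes of $J$. Matrix product code: $[C_1,\dots,C_M]\cdot A=\{[\sum_\ell a_{\ell,1}\mathbf{c}_\ell,\dots,\sum_\ell a_{\ell,N}\mathbf{c}_\ell] : \mathbf{c}_\ell\in C_\ell\}\subseteq\mathbb{F}_q^{nN}$. $A$ is upper triangular if $a_{i,j}=0$ for $i>j$. $A$ is nonsingular by columns (NSC) if for all $1\le t\le M$ and $1\le j_1<\dots<j_t\le N$ the $t\times t$ submatrix formed by the first $t$ rows and columns $j_1,\dots,j_t$ is nonsingular. *)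

(* Defs.v *)
From HB Require Import structures.
From mathcomp Require Import all_boot all_order all_algebra.
Set Implicit Arguments. Unset Strict Implicit. Unset Printing Implicit Defensive.
Import GRing.Theory.
Local Open Scope ring_scope.

(* Positions of a vector of length L are 0-based: 'I_L = {0,..,L-1};
   paper position p (1-based) corresponds to p-1.  Cyclic indexing mod L. *)

Section Defs.
Variable F : finFieldType.

Definition chi (L b : nat) (x : 'rV[F]_L) : {set 'I_L} :=
  [set i : 'I_L | [exists k : 'I_b, [exists j : 'I_L,
      (val j == (val i + val k) %% L)%N && (x 0 j != 0)]]].

Definition wb (L b : nat) (x : 'rV[F]_L) : nat := #|chi b x|.

(* minimum b-symbol distance of a code (given as a predicate);
   the default L is never reached when the code is nonzero *)
Definition db (L b : nat) (C : {pred 'rV[F]_L}) : nat :=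
  \big[minn/L]_(c : 'rV[F]_L | (c \in C) && (c != 0)) wb b c.

Definition dbV (L b : nat) (C : {vspace 'rV[F]_L}) : nat :=
  db b [pred c | c \in C].

Definition concat (N n : nat) (B : 'M[F]_(N, n)) : 'rV[F]_(N * n) :=
  \row_(k < N * n) \sum_(i < N) \sum_(j < n)
     (if (val k == val i * n + val j)%N then B i j else 0).

(* matrix product code [C_1,...,C_M] . A :
   codewords [sum_l a_{l,1} c_l, ..., sum_l a_{l,N} c_l], c_l in C_l *)
Definition mpc (M N n : nat) (Cs : 'I_M -> {vspace 'rV[F]_n})
    (A : 'M[F]_(M, N)) : {pred 'rV[F]_(N * n)} :=
  [pred x | [exists X : 'M[F]_(M, n),
     [forall l : 'I_M, row l X \in Cs l] &&
     (x == concat (\matrix_(j < N, p < n) \sum_(l < M) A l j * X l p))]].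

Definition upper_tri (M N : nat) (A : 'M[F]_(M, N)) : Prop :=
  forall (i : 'I_M) (j : 'I_N), (val j < val i)%N -> A i j = 0.

Definition NSC (M N : nat) (A : 'M[F]_(M, N)) : Prop :=
  forall (t : nat) (ht : (t <= M)%N), (1 <= t)%N ->
  forall f : 'I_t -> 'I_N, (forall k l : 'I_t, (val k < val l)%N -> (val (f k) < val (f l))%N) ->
  \det (\matrix_(k < t, l < t) A (widen_ord ht k) (f l)) != 0.

Definition is_hole (n : nat) (J H : {set 'I_n}) : Prop :=
  exists (a : 'I_n) (h : nat),
    [/\ (1 <= h)%N,
        H = [set i : 'I_n | [exists k : 'I_h.+1, (0 < val k)%N && (val i == (val a + val k) %% n)%N]],
        [disjoint H & J],
        a \in J &
        [exists j in J, val j == (val a + h + 1) %% n]%N].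

(* d^* = min_{i=1..M} (N-i+1) d_b(C_i) ; 0-based i : (N - i) *)
Definition dstar (M N n b : nat) (Cs : 'I_M -> {vspace 'rV[F]_n}) : nat :=
  \big[minn/(N * n)%N]_(i < M) ((N - val i) * dbV b (Cs i))%N.

End Defs.

(* Main.v *)
Require Import Defs.
From HB Require Import structures.
From mathcomp Require Import all_boot all_order all_algebra.
From mathcomp Require Import zify.
Set Implicit Arguments. Unset Strict Implicit. Unset Printing Implicit Defensive.
Import GRing.Theory.
Local Open Scope ring_scope.

Lemma chi_in (F : finFieldType) L b (x : 'rV[F]_L) (i : 'I_L) (k : nat) (j : 'I_L) :
  (k < b)%N -> val j = ((i + k) %% L)%N -> x 0 j != 0 -> i \in chi b x.
Proof.
move=> kb ej xj; rewrite inE; apply/existsP; exists (Ordinal kb).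
by apply/existsP; exists j; rewrite /= ej eqxx xj.
Qed.

Lemma chi_out (F : finFieldType) L b (x : 'rV[F]_L) (i : 'I_L) :
  i \in chi b x -> exists k, exists j : 'I_L, [/\ (k < b)%N, val j = ((i + k) %% L)%N & x 0 j != 0].
Proof.
rewrite inE => /existsP[k /existsP[j /andP[/eqP ej xj]]].
by exists (val k), j; split; rewrite ?ltn_ord ?ej.
Qed.

Lemma chi1E (F : finFieldType) L (x : 'rV[F]_L) (i : 'I_L) : (i \in chi 1 x) = (x 0 i != 0).
Proof.
apply/idP/idP.
  move/chi_out=> [k [j [k1 ej xj]]].
  have k0 : k = 0%N by lia.
  move: ej; rewrite k0 addn0 modn_small ?ltn_ord // => ej.
  by have -> : i = j by apply: val_inj.
move=> xi; apply: (@chi_in _ _ _ _ _ 0 i) => //.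
by rewrite addn0 modn_small.
Qed.

Lemma bigmin_le (T : finType) (P : pred T) (f : T -> nat) L c :
  P c -> (\big[minn/L]_(x | P x) f x <= f c)%N.
Proof.
move=> Pc; rewrite unlock /reducebig.
have : c \in index_enum T by rewrite mem_index_enum.
elim: (index_enum T) => //= a r IH; rewrite inE => /orP[/eqP<-|cr].
  by rewrite Pc geq_minl.
case: (P a) => //=; rewrite ?geq_min IH ?orbT //.
Qed.

Lemma bigmin_geq (T : finType) (P : pred T) (f : T -> nat) L m :
  (m <= L)%N -> (forall c, P c -> m <= f c)%N -> (m <= \big[minn/L]_(x | P x) f x)%N.
Proof.
move=> mL H; elim/big_ind: _ => //.
by move=> a b ha hb; rewrite leq_min ha hb.
Qed.

Lemma bigmin_idx (T : finType) (P : pred T) (f : T -> nat) L :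
  (\big[minn/L]_(x | P x) f x <= L)%N.
Proof.
rewrite unlock /reducebig.
elim: (index_enum T) => //= a r IH.
by case: (P a) => //; rewrite geq_min IH orbT.
Qed.

Lemma bigmin_ex (T : finType) (P : pred T) (f : T -> nat) L c0 :
  (forall x, f x <= L)%N ->
  P c0 -> exists2 c, P c & \big[minn/L]_(x | P x) f x = f c.
Proof.
move=> fL Pc0.
case: (arg_minnP f Pc0) => c Pc Hc.
exists c => //; apply/eqP; rewrite eqn_leq bigmin_le //=.
by apply: bigmin_geq.
Qed.

Lemma wb_le (F : finFieldType) L b (x : 'rV[F]_L) : (wb b x <= L)%N.
Proof. by apply: leq_trans (max_card _) _; rewrite card_ord. Qed.

Lemma wb0 (F : finFieldType) L b : wb b (0 : 'rV[F]_L) = 0%N.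
Proof.
apply/eqP; rewrite cards_eq0; apply/eqP/setP => i; rewrite in_set0.
apply/negbTE/negP => /chi_out [k [j [_ _]]]; by rewrite mxE eqxx.
Qed.

Lemma wb_pos (F : finFieldType) L b (x : 'rV[F]_L) : (0 < b)%N -> x != 0 -> (0 < wb b x)%N.
Proof.
move=> b0 /eqP xn0.
have [j xj] : exists j, x 0 j != 0.
  case: (pickP (fun j => x 0 j != 0)) => [j ?|H]; first by exists j.
  by case: xn0; apply/rowP => j; rewrite mxE; apply/eqP; move/negbFE: (H j).
rewrite /wb card_gt0; apply/set0Pn; exists j.
by apply: (@chi_in _ _ _ _ _ 0 j) => //; rewrite addn0 modn_small.
Qed.

Lemma modNn_aux (N n a q : nat) : (0 < N)%N -> (q < n)%N ->
  ((a * n + q) %% (N * n) = (a %% N) * n + q)%N.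
Proof.
move=> N0 qn.
rewrite {1}(divn_eq a N) mulnDl -mulnA -addnA modnMDl modn_small //.
have h1 : (a %% N < N)%N by rewrite ltn_mod.
apply: (@leq_trans ((a %% N).+1 * n)); first by rewrite mulSn addnC ltn_add2r.
by rewrite leq_mul2r h1 orbT.
Qed.

Lemma blk_proof N n (s : 'I_(N * n)) : (s %/ n < N)%N.
Proof.
have n0 : (0 < n)%N.
  have : (0 < N * n)%N by apply: leq_ltn_trans (ltn_ord s).
  by rewrite muln_gt0 => /andP[].
by rewrite ltn_divLR.
Qed.

Lemma pos_proof N n (s : 'I_(N * n)) : (s %% n < n)%N.
Proof.
have n0 : (0 < n)%N.
  have : (0 < N * n)%N by apply: leq_ltn_trans (ltn_ord s).
  by rewrite muln_gt0 => /andP[].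
by rewrite ltn_mod.
Qed.

Definition blk N n (s : 'I_(N * n)) : 'I_N := Ordinal (blk_proof s).
Definition pos N n (s : 'I_(N * n)) : 'I_n := Ordinal (pos_proof s).

Lemma gidx_proof N n (j : 'I_N) (p : 'I_n) : (j * n + p < N * n)%N.
Proof.
apply: (@leq_trans (j.+1 * n)); first by rewrite mulSn addnC ltn_add2r.
by rewrite leq_mul2r ltn_ord orbT.
Qed.

Definition gidx N n (j : 'I_N) (p : 'I_n) : 'I_(N * n) := Ordinal (gidx_proof j p).

Lemma blk_gidx N n (j : 'I_N) (p : 'I_n) : blk (gidx j p) = j.
Proof.
apply: val_inj => /=; have n0 : (0 < n)%N by case: n p => [[]|].
by rewrite divnMDl // divn_small // addn0.
Qed.

Lemma pos_gidx N n (j : 'I_N) (p : 'I_n) : pos (gidx j p) = p.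
Proof. by apply: val_inj => /=; rewrite modnMDl modn_small. Qed.

Lemma gidx_inj N n (j1 j2 : 'I_N) (p1 p2 : 'I_n) : gidx j1 p1 = gidx j2 p2 -> j1 = j2 /\ p1 = p2.
Proof. by move=> e; have := congr1 (@blk N n) e; have := congr1 (@pos N n) e; rewrite !blk_gidx !pos_gidx. Qed.

Lemma gidx_blk_pos N n (s : 'I_(N * n)) : gidx (blk s) (pos s) = s.
Proof. by apply: val_inj => /=; rewrite -divn_eq. Qed.

Lemma concatE (F : finFieldType) N n (B : 'M[F]_(N, n)) (s : 'I_(N * n)) :
  concat B 0 s = B (blk s) (pos s).
Proof.
have key : forall (i : 'I_N) (j : 'I_n), (val s == val i * n + val j)%N = (i == blk s) && (j == pos s).
  move=> i j; apply/eqP/andP => [e|[/eqP-> /eqP->]]; last by rewrite -divn_eq.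
  have e' : gidx i j = s by apply: val_inj.
  by rewrite -e' blk_gidx pos_gidx.
rewrite mxE.
under eq_bigr => i _ do under eq_bigr => j _ do rewrite key.
rewrite (bigD1 (blk s)) //= (bigD1 (pos s)) //= !eqxx /=.
rewrite big1 ?addr0; last by move=> j /negbTE jn; rewrite jn.
rewrite big1 ?addr0 //; move=> i /negbTE iN; apply: big1 => j _; by rewrite iN.
Qed.

Lemma nsc_count (F : finFieldType) M N (A : 'M[F]_(M, N)) (v : 'I_M -> F) (t : 'I_M) :
  NSC A -> v t != 0 -> (forall l : 'I_M, (t < l)%N -> v l = 0) ->
  (N - t <= #|[set j : 'I_N | (\sum_(l < M) A l j * v l != 0)%R]|)%N.
Proof.
move=> hN vt vz.
set Z := [set j : 'I_N | \sum_(l < M) A l j * v l == 0].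
have cZ : #|[set j : 'I_N | \sum_(l < M) A l j * v l != 0]| = (N - #|Z|)%N.
  have -> : [set j : 'I_N | \sum_(l < M) A l j * v l != 0] = ~: Z.
    by apply/setP => j; rewrite !inE.
  by rewrite cardsCs setCK card_ord.
rewrite cZ; suff : (#|Z| <= t)%N by move=> h; apply: leq_sub2l.
rewrite leqNgt; apply/negP => tZ.
have ht : (t.+1 <= M)%N by apply: ltn_ord.
have [j0 _] : exists j0 : 'I_N, j0 \in Z.
  by apply/set0Pn; rewrite -card_gt0 (leq_ltn_trans _ tZ).
set s := enum Z.
have srt : sorted (fun a b : 'I_N => (val a < val b)%N) s.
  rewrite /s /enum_mem -enumT; apply: sorted_filter; first by move=> a b c; apply: ltn_trans.
  by have := iota_ltn_sorted 0 N; rewrite -val_enum_ord sorted_map.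
have sz : size s = #|Z| by rewrite cardE.
pose f (k : 'I_t.+1) : 'I_N := nth j0 s k.
have finc : forall k l : 'I_t.+1, (val k < val l)%N -> (val (f k) < val (f l))%N.
  move=> k l kl; apply: (sorted_ltn_nth _ j0 srt) => //.
    by move=> a b c; apply: ltn_trans.
    by rewrite inE sz (leq_trans _ tZ) // ltnS -ltnS.
  by rewrite inE sz (leq_trans _ tZ) // ltnS -ltnS.
have fZ : forall k : 'I_t.+1, f k \in Z.
  move=> k; rewrite -mem_enum; apply: mem_nth; rewrite sz (leq_trans _ tZ) //.
have := hN t.+1 ht (ltn0Sn _) f finc.
set S := \matrix_(k, l) _ => dS.
pose w : 'rV[F]_t.+1 := \row_k v (widen_ord ht k).
have wS : w *m S = 0.
  apply/rowP => l; rewrite !mxE.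
  have := fZ l; rewrite inE => /eqP e; rewrite -[RHS]e.
  rewrite [RHS](bigID (fun i : 'I_M => (i < t.+1)%N)) /= [X in _ = _ + X]big1 ?addr0.
    rewrite (big_ord_narrow ht); apply: eq_bigr => k _; by rewrite !mxE mulrC.
  by move=> i; rewrite -leqNgt => ti; rewrite vz ?mulr0.
have w0 : w = 0.
  have uS : S \in unitmx by rewrite unitmxE unitfE.
  by rewrite -(mulmxK uS w) wS mul0mx.
have := congr1 (fun m : 'rV[F]_t.+1 => m 0 ord_max) w0; rewrite !mxE => e.
have ewt : widen_ord ht ord_max = t by apply: val_inj.
by move: vt; rewrite -ewt e eqxx.
Qed.

Lemma blk_pos_of N n (s : 'I_(N * n)) a q : (q < n)%N -> val s = (a * n + q)%N ->
  val (blk s) = a /\ val (pos s) = q.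
Proof.
move=> qn e; have n0 : (0 < n)%N by apply: leq_ltn_trans qn.
by rewrite /= e divnMDl // divn_small // addn0 modnMDl modn_small.
Qed.

Lemma shiftE N n (j : 'I_N) (p : 'I_n) k : (0 < N)%N ->
  ((gidx j p + k) %% (N * n) = ((j + (p + k) %/ n) %% N) * n + (p + k) %% n)%N.
Proof.
move=> N0; have n0 : (0 < n)%N by apply: leq_ltn_trans (ltn_ord p).
rewrite /= -addnA {1}(divn_eq (p + k) n) addnA -mulnDl modNn_aux //.
by rewrite ltn_mod.
Qed.

Lemma core (F : finFieldType) M N n b (A : 'M[F]_(M, N)) (X : 'M[F]_(M, n)) (t : 'I_M) :
  (0 < N)%N -> (0 < n)%N -> (b <= n)%N -> NSC A -> row t X != 0 ->
  (forall l : 'I_M, (t < l)%N -> row l X = 0) ->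
  ((N - t) * wb b (row t X) <=
     wb b (concat (\matrix_(j < N, p < n) (\sum_(l < M) A l j * X l p)%R)))%N.
Proof.
move=> N0 n0 bn hN ct tmax.
set c := row t X.
set Y := \matrix_(j < N, p < n) \sum_(l < M) A l j * X l p.
set x := concat Y.
have L0 : (0 < N * n)%N by rewrite muln_gt0 N0.
pose gs (s : 'I_(N * n)) (k : nat) : 'I_(N * n) := Ordinal (ltn_pmod (s + k) L0).
pose qo (p : 'I_n) (k : nat) : 'I_n := Ordinal (ltn_pmod (p + k) n0).
pose kp (p : 'I_n) : option 'I_b := [pick k : 'I_b | c 0 (qo p k) != 0].
pose S (p : 'I_n) : {set 'I_N} :=
  if kp p is Some k then [set j : 'I_N | x 0 (gs (gidx j p) k) != 0] else set0.
have C1 : forall p j, j \in S p -> gidx j p \in chi b x.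
  move=> p j; rewrite /S; case: (kp p) => [k|]; last by rewrite inE.
  by rewrite inE => xj; apply: (@chi_in _ _ _ _ _ k (gs (gidx j p) k)).
have C2 : forall p, p \in chi b c -> (N - t <= #|S p|)%N.
  move=> p /chi_out [k [q [kb eq cq]]].
  have : c 0 (qo p (Ordinal kb)) != 0.
    by have -> : qo p (Ordinal kb) = q by apply: val_inj; rewrite /= eq.
  rewrite /S /kp; case: pickP => [k' ck' _|]; last by move=> H; rewrite H.
  set e := ((p + k') %/ n)%N.
  pose phi (j : 'I_N) : 'I_N := Ordinal (ltn_pmod (j + e) N0).
  have phi_inj : injective phi.
    move=> j1 j2 /(congr1 val) /= /eqP; rewrite eqn_modDr => /eqP.
    by rewrite !modn_small // => /val_inj.
  have -> : [set j : 'I_N | x 0 (gs (gidx j p) k') != 0] =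
            phi @^-1: [set j : 'I_N | (\sum_(l < M) A l j * X l (qo p k') != 0)%R].
    apply/setP => j; rewrite !inE /x concatE.
    have [hb hp] := @blk_pos_of N n (gs (gidx j p) k') ((j + e) %% N) ((p + k') %% n)
       (ltn_pmod _ n0) (shiftE j p k' N0).
    have -> : blk (gs (gidx j p) k') = phi j by apply: val_inj; rewrite hb.
    have -> : pos (gs (gidx j p) k') = qo p k' by apply: val_inj; rewrite hp.
    by rewrite mxE.
  rewrite card_preimset //.
  apply: (nsc_count (v := fun l => X l (qo p k'))) => //.
    by move: ck'; rewrite /c mxE.
  by move=> l tl; have := congr1 (fun m : 'rV[F]_n => m 0 (qo p k')) (tmax l tl); rewrite /= !mxE.
pose P := [set pj : 'I_n * 'I_N | (pj.1 \in chi b c) && (pj.2 \in S pj.1)].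
have cP : #|P| = (\sum_(p in chi b c) #|S p|)%N.
  rewrite -sum1_card.
  under [RHS]eq_bigr => p _ do rewrite -sum1_card.
  by rewrite pair_big_dep; apply: eq_bigl => pj; rewrite inE.
have sub : [set gidx pj.2 pj.1 | pj in P] \subset chi b x.
  apply/subsetP => s /imsetP [pj]; rewrite inE => /andP [_ hS] ->.
  exact: C1.
have inj : {in P &, injective (fun pj : 'I_n * 'I_N => gidx pj.2 pj.1)}.
  move=> [p1 j1] [p2 j2] _ _ /= /gidx_inj [-> ->] //.
rewrite /wb mulnC.
apply: leq_trans (subset_leq_card sub); rewrite card_in_imset // cP.
rewrite -sum_nat_const; apply: leq_sum => p; exact: C2.
Qed.

Lemma hole_gap (F : finFieldType) n b (c : 'rV[F]_n) (H : {set 'I_n}) (u v : 'I_n) :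
  (b <= n)%N -> is_hole (chi 1 c) H -> (b - 1 <= #|H|)%N ->
  [exists i in H, (val i == 0)%N || (val i == n.-1)%N] ->
  c 0 u != 0 -> c 0 v != 0 -> (u + n <= v + b - 1)%N -> False.
Proof.
move=> bn [a [h [h1 eH dis aJ _]]] cardH /existsP[z /andP[zH z01]] cu cv uv.
have n0 : (0 < n)%N by apply: leq_ltn_trans (ltn_ord u).
have memH : forall (y : 'I_n) k, (0 < k)%N -> (k <= h)%N -> val y = ((a + k) %% n)%N -> y \in H.
  move=> y k k0 kh ey; rewrite eH inE; apply/existsP.
  have kh' : (k < h.+1)%N by rewrite ltnS.
  by exists (Ordinal kh'); rewrite /= k0 ey eqxx.
have notJ : forall y : 'I_n, y \in H -> c 0 y = 0.
  move=> y yH; have := disjointFr dis yH; rewrite chi1E => /negbFE/eqP //.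
have hn : (h < n)%N.
  rewrite ltnNge; apply/negP => nh.
  have aH : a \in H by apply: (memH a n) => //; rewrite modnDr modn_small.
  by move: aJ; rewrite chi1E notJ ?eqxx.
have cardHh : (#|H| <= h)%N.
  pose f (k : 'I_h.+1) : 'I_n := Ordinal (ltn_pmod (a + k) n0).
  have sub : H \subset f @: [set~ ord0].
    apply/subsetP => y; rewrite eH inE => /existsP[k /andP[k0 /eqP ey]].
    apply/imsetP; exists k; first by rewrite !inE; apply/eqP => e; move: k0; rewrite e.
    by apply: val_inj.
  apply: leq_trans (subset_leq_card sub) _; apply: leq_trans (leq_imset_card _ _) _.
  by rewrite cardsC1 card_ord.
move: zH; rewrite eH inE => /existsP[k0 /andP[k00 /eqP ez]].
have zH : z \in H by apply: (memH z k0) => //; rewrite -ltnS.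
have zu : val z != val u.
  apply/negP => /eqP e; have : z = u by apply: val_inj.
  by move=> e'; move: cu; rewrite -e' notJ ?eqxx.
have zv : val z != val v.
  apply/negP => /eqP e; have : z = v by apply: val_inj.
  by move=> e'; move: cv; rewrite -e' notJ ?eqxx.
have vout : ~ ((a < v)%N /\ (v <= a + h)%N).
  move=> [av vah]; have vH : v \in H.
    apply: (memH v (v - a)%N); [by rewrite subn_gt0 | by rewrite leq_subLR |].
    by rewrite subnKC ?(ltnW av) // modn_small.
  by move: cv; rewrite notJ ?eqxx.
have uout : ~ ((a < u + n)%N /\ (u + n <= a + h)%N).
  move=> [av vah]; have uH : u \in H.
    apply: (memH u (u + n - a)%N); [by rewrite subn_gt0 | by rewrite leq_subLR |].
    by rewrite subnKC ?(ltnW av) // modnDr modn_small.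
  by move: cu; rewrite notJ ?eqxx.
have k0h : (nat_of_ord k0 <= h)%N by rewrite -ltnS.
have k00' : (0 < nat_of_ord k0)%N := k00.
have ez' : nat_of_ord z = ((nat_of_ord a + nat_of_ord k0) %% n)%N := ez.
have an := ltn_ord a; have un := ltn_ord u; have vn := ltn_ord v; have zn := ltn_ord z.
have z01' : (nat_of_ord z == 0)%N || (nat_of_ord z == n.-1)%N := z01.
have zu' : (nat_of_ord z != nat_of_ord u) := zu.
have zv' : (nat_of_ord z != nat_of_ord v) := zv.
clear z01 zu zv ez k00 memH notJ eH dis aJ zH.
have [Zlt|Zge] := ltnP (nat_of_ord a + nat_of_ord k0) n.
  move: ez'; rewrite modn_small // => ez'.
  move/orP: z01' => [/eqP|/eqP] Z; lia.
move: ez'; rewrite -[(nat_of_ord a + nat_of_ord k0)%N](subnK Zge) modnDr modn_small; last by lia.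
move=> ez'; move/orP: z01' => [/eqP|/eqP] Z; lia.
Qed.

Definition sX (F : finFieldType) M n (i : 'I_M) (c : 'rV[F]_n) : 'M[F]_(M, n) :=
  \matrix_(l, p) (if l == i then c 0 p else 0).

Definition sx (F : finFieldType) M N n (A : 'M[F]_(M, N)) (i : 'I_M) (c : 'rV[F]_n) : 'rV[F]_(N * n) :=
  concat (\matrix_(j < N, p < n) (\sum_(l < M) A l j * sX i c l p)%R).

Lemma sx_mem (F : finFieldType) M N n (Cs : 'I_M -> {vspace 'rV[F]_n}) (A : 'M[F]_(M, N)) i c :
  c \in Cs i -> sx A i c \in mpc Cs A.
Proof.
move=> ci; rewrite inE; apply/existsP; exists (sX i c); rewrite eqxx andbT.
apply/forallP => l.
have -> : row l (sX i c) = if l == i then c else 0.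
  by apply/rowP => p; rewrite !mxE; case: (l == i); rewrite ?mxE.
by case: eqP => [->|_] //; rewrite mem0v.
Qed.

Lemma sx_entry (F : finFieldType) M N n (A : 'M[F]_(M, N)) (i : 'I_M) (c : 'rV[F]_n) (s : 'I_(N * n)) :
  upper_tri A -> sx A i c 0 s != 0 -> (i <= blk s)%N /\ c 0 (pos s) != 0.
Proof.
move=> hU; rewrite /sx concatE mxE (bigD1 i) //= big1 ?addr0; last first.
  by move=> l /negbTE li; rewrite mxE li mulr0.
rewrite mxE eqxx; case: (leqP i (blk s)) => [ib|bi].
  by move=> h; split => //; apply: contraNneq h => ->; rewrite mulr0.
by rewrite hU // mul0r eqxx.
Qed.

Lemma sx_nz (F : finFieldType) M N n b (A : 'M[F]_(M, N)) (i : 'I_M) (c : 'rV[F]_n) :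
  (M <= N)%N -> (0 < b)%N -> (b <= n)%N -> NSC A -> c != 0 ->
  ((N - i) * wb b c <= wb b (sx A i c))%N /\ sx A i c != 0.
Proof.
move=> MN b0 bn hN cn0.
have iN : (i < N)%N by apply: leq_trans (ltn_ord i) MN.
have N0 : (0 < N)%N by apply: leq_ltn_trans iN.
have n0 : (0 < n)%N by apply: leq_trans bn.
have ri : row i (sX i c) = c by apply/rowP => p; rewrite !mxE eqxx.
have h := @core F M N n b A (sX i c) i N0 n0 bn hN.
rewrite ri in h; have {}h := h cn0.
have h' : ((N - i) * wb b c <= wb b (sx A i c))%N.
  apply: h => l il; apply/rowP => p; rewrite !mxE.
  by case: eqP => // e; move: il; rewrite e ltnn.
split => //; apply/eqP => e; move: h'; rewrite e wb0 leqn0 muln_eq0 => /orP[|].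
  by rewrite subn_eq0 leqNgt iN.
by move/eqP => w0; move: (wb_pos b0 cn0); rewrite w0.
Qed.

Lemma sx_chi (F : finFieldType) M N n b (A : 'M[F]_(M, N)) (i : 'I_M) (c : 'rV[F]_n) (s : 'I_(N * n)) :
  upper_tri A -> (0 < N)%N -> (b <= n)%N -> s \in chi b (sx A i c) ->
  pos s \in chi b c /\
  ((0 < i)%N ->
   ((i <= blk s)%N /\ (val (blk s) = N.-1 -> exists u : 'I_n, [/\ c 0 u != 0, (pos s <= u)%N & (u <= pos s + b - 1)%N]))
   \/
   [/\ (blk s).+1 = i, (n - b < pos s)%N & exists u : 'I_n, c 0 u != 0 /\ (u + n <= pos s + b - 1)%N]).
Proof.
move=> hU N0 bn /chi_out [k [g [kb eg xg]]].
have [ig cg] := sx_entry hU xg.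
set j := blk s; set p := pos s.
have n0 : (0 < n)%N by apply: leq_ltn_trans (ltn_ord p).
have es : val s = (j * n + p)%N by rewrite /j /p /= -divn_eq.
have pn := ltn_ord p; have jN := ltn_ord j.
have [lt|ge] := ltnP (p + k) n.
  have eg' : val g = (j * n + (p + k))%N.
    by rewrite eg es -addnA modNn_aux // modn_small.
  have [hb hp] := blk_pos_of lt eg'.
  split.
    by apply: (@chi_in _ _ _ _ _ k (pos g)) => //; rewrite hp modn_small.
  move=> i0; left; split; first by rewrite -hb.
  move=> _; exists (pos g); split => //; rewrite hp; lia.
have lt2 : (p + k - n < n)%N by lia.
have eg' : val g = ((j.+1 %% N) * n + (p + k - n))%N.
  rewrite eg es -modNn_aux //; congr (_ %% _)%N; rewrite mulSn; lia.
have [hb hp] := blk_pos_of lt2 eg'.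
split.
  apply: (@chi_in _ _ _ _ _ k (pos g)) => //; rewrite hp.
  by rewrite -[in RHS](subnK ge) modnDr modn_small.
move=> i0.
have jN1 : (j.+1 < N)%N.
  rewrite ltn_neqAle jN andbT; apply/negP => /eqP e.
  by move: ig; rewrite hb e modnn leqNgt i0.
move: ig; rewrite hb modn_small // => ig.
have [ij|ji] := leqP i j.
  left; split => // e; move: jN1; rewrite e; lia.
right; split.
- apply/eqP; rewrite eqn_leq ig andbT; exact: ji.
- lia.
- exists (pos g); split => //; rewrite hp; lia.
Qed.

Lemma card_int N lo hi : (#|[set j : 'I_N | (lo <= j)%N && (j < hi)%N]| <= hi - lo)%N.
Proof.
rewrite -sum1_card.
have -> : (\sum_(j in [set j : 'I_N | (lo <= j)%N && (j < hi)%N]) 1 =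
   \sum_(j < N) ((lo <= j)%N && (j < hi)%N : nat))%N.
  by rewrite big_mkcond /=; apply: eq_bigr => j _; rewrite inE; case: ifP.
suff -> : (\sum_(j < N) ((lo <= j)%N && (j < hi)%N : nat) = minn N hi - lo)%N.
  by apply: leq_sub2r; rewrite geq_minr.
elim: N => [|N IH]; first by rewrite big_ord0 min0n.
rewrite big_ord_recr /= IH.
case: (leqP lo N) => loN; case: (ltnP N hi) => Nhi /=; rewrite /minn; repeat case: ifP; lia.
Qed.

Lemma wbD (F : finFieldType) N n b (x : 'rV[F]_(N * n)) :
  wb b x = #|[set (blk s, pos s) | s in chi b x]|.
Proof.
rewrite /wb card_in_imset // => s1 s2 _ _ e.
rewrite -[s1]gidx_blk_pos -[s2]gidx_blk_pos.
by have /= -> := congr1 fst e; have /= -> := congr1 snd e.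
Qed.

Lemma UB1 (F : finFieldType) M N n b (A : 'M[F]_(M, N)) (i : 'I_M) (c : 'rV[F]_n) :
  upper_tri A -> (0 < N)%N -> (b <= n)%N -> (wb b (sx A i c) <= N * wb b c)%N.
Proof.
move=> hU N0 bn; rewrite wbD.
have sub : [set (blk s, pos s) | s in chi b (sx A i c)] \subset setX [set: 'I_N] (chi b c).
  apply/subsetP => jp /imsetP [s hs ->]; rewrite inE /=.
  by have [h _] := sx_chi hU N0 bn hs; rewrite inE h.
by apply: leq_trans (subset_leq_card sub) _; rewrite cardsX cardsT card_ord.
Qed.

Lemma UB2 (F : finFieldType) M N n b (A : 'M[F]_(M, N)) (i : 'I_M) (c : 'rV[F]_n) :
  upper_tri A -> (M <= N)%N -> (1 <= b)%N -> (b <= n)%N -> (0 < i)%N ->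
  (wb b (sx A i c) <= (N - i) * wb b c + b - 1)%N.
Proof.
move=> hU MN b1 bn i0.
have iN : (i < N)%N by apply: leq_trans (ltn_ord i) MN.
have N0 : (0 < N)%N by apply: leq_ltn_trans iN.
rewrite wbD.
set D1 := setX [set j : 'I_N | (i <= j)%N && (j < N)%N] (chi b c).
set D2 := setX [set j : 'I_N | (i - 1 <= j)%N && (j < i)%N] [set p : 'I_n | (n - b + 1 <= p)%N && (p < n)%N].
have sub : [set (blk s, pos s) | s in chi b (sx A i c)] \subset D1 :|: D2.
  apply/subsetP => jp /imsetP [s hs ->].
  have [h1 h2] := sx_chi hU N0 bn hs.
  case: (h2 i0) => [[ib _]|[e np _]].
    apply/setUP; left; apply/setXP; split => //.
    by rewrite inE; apply/andP; split; [exact: ib | exact: ltn_ord].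
  apply/setUP; right; apply/setXP; split; rewrite inE; apply/andP; split.
  - move: e; rewrite -/(blk s); lia.
  - by rewrite -e.
  - move: np; lia.
  - exact: ltn_ord.
apply: leq_trans (subset_leq_card sub) _.
rewrite cardsU; apply: leq_trans (leq_subr _ _) _.
rewrite /D1 /D2 !cardsX -addnBA //.
apply: leq_add.
  exact: leq_mul (card_int _ _ _) (leqnn _).
apply: leq_trans (leq_mul (card_int _ _ _) (card_int _ _ _)) _.
have -> : (i - (i - 1) = 1)%N by lia.
rewrite mul1n; lia.
Qed.

Lemma UB3 (F : finFieldType) M N n b (A : 'M[F]_(M, N)) (i : 'I_M) (c : 'rV[F]_n) (H : {set 'I_n}) :
  upper_tri A -> (M <= N)%N -> (1 <= b)%N -> (b <= n)%N -> (0 < i)%N ->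
  is_hole (chi 1 c) H -> (b - 1 <= #|H|)%N ->
  [exists i in H, (val i == 0)%N || (val i == n.-1)%N] ->
  (wb b (sx A i c) <= (N - i) * wb b c)%N.
Proof.
move=> hU MN b1 bn i0 hH cH eH.
have iN : (i < N)%N by apply: leq_trans (ltn_ord i) MN.
have N0 : (0 < N)%N by apply: leq_ltn_trans iN.
have n0 : (0 < n)%N by apply: leq_trans bn.
rewrite wbD.
set S1 := [set p : 'I_n | [exists u : 'I_n, [&& c 0 u != 0, (p <= u)%N & (u <= p + b - 1)%N]]].
set S2 := [set p : 'I_n | (n - b < p)%N && [exists u : 'I_n, (c 0 u != 0) && (u + n <= p + b - 1)%N]].
set D1 := setX [set j : 'I_N | (i <= j)%N && (j < N.-1)%N] (chi b c).
set D2 := setX [set j : 'I_N | (N.-1 <= j)%N && (j < N)%N] S1.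
set D3 := setX [set j : 'I_N | (i - 1 <= j)%N && (j < i)%N] S2.
have sub : [set (blk s, pos s) | s in chi b (sx A i c)] \subset D1 :|: (D2 :|: D3).
  apply/subsetP => jp /imsetP [s hs ->].
  have [h1 h2] := sx_chi hU N0 bn hs.
  case: (h2 i0) => [[ib hl]|[e np [u [cu hu]]]].
    have [eN|neN] := eqVneq (val (blk s)) N.-1.
      have [u [cu pu up]] := hl eN.
      apply/setUP; right; apply/setUP; left; apply/setXP; split.
        by rewrite inE; apply/andP; split; [rewrite -eN | exact: ltn_ord].
      by rewrite inE; apply/existsP; exists u; rewrite cu pu up.
    apply/setUP; left; apply/setXP; split => //.
    rewrite inE; apply/andP; split; first exact: ib.
    have := ltn_ord (blk s); have neN2 : nat_of_ord (blk s) != N.-1 := neN; move: neN2; lia.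
  apply/setUP; right; apply/setUP; right; apply/setXP; split.
    rewrite inE; apply/andP; split; [move: e; rewrite -/(blk s); lia | by rewrite -e].
  by rewrite inE np; apply/existsP; exists u; rewrite cu hu.
have S12 : S1 :&: S2 = set0.
  apply/setP => p; rewrite in_set0; apply/negbTE/negP; rewrite inE => /andP[].
  rewrite !inE => /existsP[v /and3P[cv pv _]] /andP[_ /existsP[u /andP[cu up]]].
  apply: (hole_gap bn hH cH eH cu cv); lia.
have S1c : S1 \subset chi b c.
  apply/subsetP => p; rewrite inE => /existsP[u /and3P[cu pu up]].
  apply: (@chi_in _ _ _ _ _ (u - p)%N u) => //; first lia.
  by rewrite subnKC // modn_small.
have S2c : S2 \subset chi b c.
  apply/subsetP => p; rewrite inE => /andP[np /existsP[u /andP[cu up]]].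
  have pn := ltn_ord p; have un := ltn_ord u.
  apply: (@chi_in _ _ _ _ _ (u + n - p)%N u) => //; first lia.
  by rewrite subnKC ?modnDr ?modn_small //; lia.
have cS : (#|S1| + #|S2| <= #|chi b c|)%N.
  have : #|S1 :|: S2| = (#|S1| + #|S2|)%N by rewrite cardsU S12 cards0 subn0.
  move=> <-; apply: subset_leq_card; by rewrite subUset S1c S2c.
apply: leq_trans (subset_leq_card sub) _.
rewrite cardsU; apply: leq_trans (leq_subr _ _) _.
rewrite cardsU; apply: leq_trans (leq_add (leqnn _) (leq_subr _ _)) _.
rewrite /D1 /D2 /D3 !cardsX.
have e1 := leq_mul (card_int N i N.-1) (leqnn #|chi b c|).
have e2 := leq_mul (card_int N N.-1 N) (leqnn #|S1|).
have e3 := leq_mul (card_int N (i - 1) i) (leqnn #|S2|).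
have h1 : (N - N.-1 = 1)%N by lia.
have h2 : (i - (i - 1) = 1)%N by move: i0; lia.
rewrite h1 mul1n in e2; rewrite h2 mul1n in e3.
have -> : (N - i = (N.-1 - i).+1)%N by lia.
rewrite mulSn /wb.
apply: leq_trans (leq_add e1 (leq_add e2 e3)) _.
by rewrite addnC leq_add2r.
Qed.

Lemma concat0 (F : finFieldType) N n : concat (0 : 'M[F]_(N, n)) = 0.
Proof. by apply/rowP => s; rewrite concatE !mxE. Qed.

Theorem mainTheorem5 (F : finFieldType) (M N n b : nat)
  (Cs : 'I_M -> {vspace 'rV[F]_n}) (A : 'M[F]_(M, N))
  (hM : (0 < M)%N) (hMN : (M <= N)%N)
  (hCs : forall i : 'I_M, Cs i != 0%VS)
  (hUT : upper_tri A) (hNSC : NSC A)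
  (hb1 : (1 <= b)%N) (hbn : (b <= n)%N) :
  let C := mpc Cs A in
  let C1 := Cs (Ordinal hM) in
  let ds := dstar N b Cs in
  (* (a) *)
  ((db b C <= N * dbV b C1)%N /\
   (forall i : 'I_M, (0 < val i)%N ->
      (db b C <= (N - val i) * dbV b (Cs i) + b - 1)%N))
  /\
  (* (b) *)
  (ds = (N * dbV b C1)%N -> db b C = ds)
  /\
  (* (c) *)
  (forall i0 : 'I_M, (0 < val i0)%N ->
     ((N - val i0) * dbV b (Cs i0))%N = ds ->
     (exists c : 'rV[F]_n,
        [/\ c \in Cs i0, wb b c = dbV b (Cs i0) &
         exists H : {set 'I_n},
           [/\ is_hole (chi 1 c) H, (b - 1 <= #|H|)%N &
               [exists i in H, (val i == 0)%N || (val i == n.-1)%N]]]) ->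
     db b C = ds).
Proof.
move=> C C1 ds.
have N0 : (0 < N)%N by apply: leq_trans hMN.
have n0 : (0 < n)%N by apply: leq_trans hbn.
have minc : forall i : 'I_M, exists c : 'rV[F]_n, [/\ c \in Cs i, c != 0 & wb b c = dbV b (Cs i)].
  move=> i.
  have P0 : (vpick (Cs i) \in [pred c | c \in Cs i]) && (vpick (Cs i) != 0).
    by rewrite inE memv_pick vpick0 hCs.
  have [c /andP[ci cn] e] := bigmin_ex (P := fun x => (x \in [pred c | c \in Cs i]) && (x != 0)) (fun x => wb_le b x) P0.
  by exists c; split => //; rewrite /dbV /db e.
have dbpos : forall i : 'I_M, (1 <= dbV b (Cs i))%N.
  move=> i; apply: bigmin_geq => // x /andP[_ xn]; exact: wb_pos.
have dbC : forall x, x \in C -> x != 0 -> (db b C <= wb b x)%N.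
  by move=> x xC xn; apply: (bigmin_le (P := fun x => (x \in C) && (x != 0))); rewrite xC.
have LB : (ds <= db b C)%N.
  apply: bigmin_geq; first exact: bigmin_idx.
  move=> x /andP[xC xn].
  move: xC; rewrite inE => /existsP[X /andP[/forallP hX /eqP ex]].
  have [l0 rl0] : exists l0, row l0 X != 0.
    case: (pickP (fun l => row l X != 0)) => [l ?|H]; first by exists l.
    move: xn; rewrite ex.
    have -> : (\matrix_(j < N, p < n) \sum_(l < M) A l j * X l p) = 0.
      apply/matrixP => j p; rewrite !mxE big1 // => l _.
      have := congr1 (fun m : 'rV[F]_n => m 0 p) (eqP (negbFE (H l))).
      by rewrite /= !mxE => ->; rewrite mulr0.
    by rewrite concat0 eqxx.
  case: (@arg_maxnP _ l0 (fun l : 'I_M => row l X != 0) (fun l : 'I_M => val l) rl0) => t rt tmax.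
  have tm : forall l : 'I_M, (t < l)%N -> row l X = 0.
    move=> l tl; apply/eqP; apply/negP => /negP rl.
    have h := tmax l rl; have h2 : (nat_of_ord l <= nat_of_ord t)%N := h; have tl2 : (nat_of_ord t < nat_of_ord l)%N := tl; lia.
  have hc := core N0 n0 hbn hNSC rt tm.
  rewrite ex; apply: leq_trans hc.
  have hb := @bigmin_le _ xpredT (fun i : 'I_M => ((N - i) * dbV b (Cs i))%N) (N * n) t isT.
  apply: leq_trans hb _.
  rewrite leq_mul2l; apply/orP; right.
  apply: (bigmin_le (P := fun x => (x \in [pred c | c \in Cs t]) && (x != 0))).
  by rewrite inE hX rt.
have a1 : (db b C <= N * dbV b C1)%N.
  have [c [ci cn ec]] := minc (Ordinal hM).
  have [_ xn] := sx_nz (Ordinal hM) hMN hb1 hbn hNSC cn.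
  apply: leq_trans (dbC _ (sx_mem A ci) xn) _.
  by rewrite /C1 -ec; apply: UB1.
split; first split.
- exact: a1.
- move=> i i0.
  have [c [ci cn ec]] := minc i.
  have [_ xn] := sx_nz i hMN hb1 hbn hNSC cn.
  apply: leq_trans (dbC _ (sx_mem A ci) xn) _.
  by rewrite -ec; apply: UB2.
split.
- by move=> e; apply/eqP; rewrite eqn_leq LB andbT e.
move=> i0 i00 ei0 [c [ci ec [H [hH cH eH]]]].
have cn : c != 0.
  by apply/eqP => c0; move: (dbpos i0); rewrite -ec c0 wb0.
have [_ xn] := sx_nz i0 hMN hb1 hbn hNSC cn.
apply/eqP; rewrite eqn_leq LB andbT -ei0 -ec.
apply: leq_trans (dbC _ (sx_mem A ci) xn) _.
exact: (UB3 hUT hMN hb1 hbn i00 hH cH eH).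
Qed.
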